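(* Let $\bar D$ be any distribution over $\mathcal{X}\times\{0,1\}$ with random variables $(\mathsf X,\bar{\mathsf Y})\sim\bar D$, and let $f\colon\mathcal X\to[0,1]$ be any randomised classifier. Let $\tau\in[0,1]$ and put $c:=\frac{1}{1+\tau}\in[\tfrac12,1]$. Then: (i) if $\mathrm{FNR}(f;\bar D)<1$, then $\mathrm{DI}(f;\bar D)\ge\tau \iff \mathrm{CS}_{\mathrm{bal}}(f;\bar D,c)\ge 1-c$; (ii) if $0<\mathrm{FNR}(f;\bar D)<1$, then $\mathrm{DI}^\diamond(f;\bar D)\ge\tau \iff \mathrm{CS}_{\mathrm{bal}}(f;\bar D,c)\in[1-c,\,c]$.
   Context: A randomised classifier $f\colon\mathcal X\to[0,1]$ predicts label $1$ on $x$ with probability $f(x)$. For a distribution $\bar D$ of $(\mathsf X,\bar{\mathsf Y})$ on $\mathcal X\times\{0,1\}$: $\mathrm{FNR}(f;\bar D)=\mathbb E_{\mathsf X\mid\bar{\mathsf Y}=1}[1-f(\mathsf X)]$, $\mathrm{FPR}(f;\bar D)=\mathbb E_{\mathsf X\mid\bar{\mathsf Y}=0}[f(\mathsf X)]$. The balanced cost-sensitive risk is $\mathrm{CS}_{\mathrm{bal}}(f;\bar D,c)=(1-c)\,\mathrm{FNR}(f;\bar D)+c\,\mathrm{FPR}(f;\bar D)$. The disparate impact factor is $\mathrm{DI}(f;\bar D)=\frac{\mathrm{FPR}(f;\bar D)}{1-\mathrm{FNR}(f;\bar D)}$, and its symmetrised version is $\mathrm{DI}^\diamond(f;\bar D)=\min\big(\mathrm{DI}(f;\bar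 D),\mathrm{DI}(1-f;\bar D)\big)$, where $1-f$ is the classifier $x\mapsto 1-f(x)$. *)

(* Defs.v *)
From HB Require Import structures.
From mathcomp Require Import all_boot all_order all_algebra.
From mathcomp Require Import all_classical all_reals all_analysis.
Set Implicit Arguments. Unset Strict Implicit. Unset Printing Implicit Defensive.
Import Order.TTheory GRing.Theory Num.Theory.
Local Open Scope classical_set_scope.
Local Open Scope ring_scope.

(* A distribution Dbar of (X, Ybar) on X * bool is a probability measure
   P : probability (X * bool) R.  Conditional expectations given Ybar = y are
   E[g | Ybar = y] = (\int_{Ybar = y} g dP) / P(Ybar = y)
   (well defined when P(Ybar = y) > 0, which the theorem assumes). *)

Definition pos_event (X : Type) : set (X * bool) := [set z | z.2 = true].
Definition neg_event (X : Type) : set (X * bool) := [set z | z.2 = false].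

Definition condE (d : measure_display) (X : measurableType d) (R : realType)
  (P : probability (X * bool)%type R) (A : set (X * bool)) (g : X -> R) : R :=
  fine (\int[P]_(z in A) (g z.1)%:E) / fine (P A).

Definition FNR d (X : measurableType d) (R : realType)
  (P : probability (X * bool)%type R) (f : X -> R) : R :=
  condE P (@pos_event X) (fun x => 1 - f x).

Definition FPR d (X : measurableType d) (R : realType)
  (P : probability (X * bool)%type R) (f : X -> R) : R :=
  condE P (@neg_event X) f.

Definition CSbal d (X : measurableType d) (R : realType)
  (P : probability (X * bool)%type R) (f : X -> R) (c : R) : R :=
  (1 - c) * FNR P f + c * FPR P f.

(* DI(f; Dbar) = FPR / (1 - FNR)   (MathComp convention: x / 0 = 0) *)
Definition DI d (X : measurableType d) (R : realType)
  (P : probability (X * bool)%type R) (f : X -> R) : R :=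
  FPR P f / (1 - FNR P f).

Definition DIsym d (X : measurableType d) (R : realType)
  (P : probability (X * bool)%type R) (f : X -> R) : R :=
  Num.min (DI P f) (DI P (fun x => 1 - f x)).

(* Main.v *)
Require Import Defs.
From HB Require Import structures.
From mathcomp Require Import all_boot all_order all_algebra.
From mathcomp Require Import all_classical all_reals all_analysis.
From mathcomp Require Import ring lra.
Import Order.TTheory GRing.Theory Num.Theory.
Local Open Scope classical_set_scope.
Local Open Scope ring_scope.

Lemma condE_compl (d : measure_display) (X : measurableType d) (R : realType)
  (P : probability (X * bool)%type R) (A : set (X * bool))
  (mA : measurable A) (hA : (0 < P A)%E)
  (g : X -> R) (gm : measurable_fun setT g) (g01 : forall x, 0 <= g x <= 1) :
  condE P A (fun x => 1 - g x) = 1 - condE P A g.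
Proof.
rewrite /condE.
set I1 := (\int[P]_(z in A) (1 - g z.1)%:E)%E.
set I2 := (\int[P]_(z in A) (g z.1)%:E)%E.
have HD : (I1 + I2 = P A)%E.
{ rewrite /I1 /I2 -ge0_integralD //.
  all: try (by move=> z _; rewrite lee_fin ?subr_ge0; case/andP: (g01 z.1)).
  2: { apply/measurable_realfun.measurable_EFinP; apply: measurable_funTS.
     apply: measurable_realfun.measurable_funB; first exact: measurable_cst.
     exact: measurableT_comp gm measurable_fst. }
  2: { apply/measurable_realfun.measurable_EFinP; apply: measurable_funTS.
     exact: measurableT_comp gm measurable_fst. }
  transitivity (\int[P]_(z in A) cst 1%E z)%E.
    by apply: eq_integral => z _; rewrite -EFinD subrK.
  by rewrite integral_cst // mul1e. }
have I1ge : (0 <= I1)%E.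
  by apply: integral_ge0 => z _; rewrite lee_fin subr_ge0; case/andP: (g01 z.1).
have I2ge : (0 <= I2)%E.
  by apply: integral_ge0 => z _; rewrite lee_fin; case/andP: (g01 z.1).
have PA1 : (P A <= 1)%E := probability_le1 P mA.
have PAf : P A \is a fin_num.
  by rewrite ge0_fin_numE ?(le_lt_trans PA1) ?ltry // ltW.
have PAlt : (P A < +oo)%E by rewrite (le_lt_trans PA1) // ltry.
have I1f : I1 \is a fin_num.
  rewrite ge0_fin_numE // (@le_lt_trans _ _ (P A)) //.
  by rewrite -HD leeDl.
have I2f : I2 \is a fin_num.
  rewrite ge0_fin_numE // (@le_lt_trans _ _ (P A)) //.
  by rewrite -HD leeDr.
clearbody I1 I2.
have H : fine I1 = fine (P A) - fine I2.
  by rewrite -HD fineD // addrK.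
have pA0 : fine (P A) != 0.
  by rewrite gt_eqF // fine_gt0 // hA /=.
by rewrite H mulrBl divff.
Qed.

Theorem lemma1 (d : measure_display) (X : measurableType d) (R : realType)
  (P : probability (X * bool)%type R)
  (hpos : (0 < P (@pos_event X))%E) (hneg : (0 < P (@neg_event X))%E)
  (f : X -> R) (fmeas : measurable_fun setT f)
  (f01 : forall x, 0 <= f x <= 1)
  (tau : R) (htau : 0 <= tau <= 1) :
  let c := (1 + tau)^-1 in
  (FNR P f < 1 -> (tau <= DI P f <-> 1 - c <= CSbal P f c)) /\
  (0 < FNR P f < 1 ->
     (tau <= DIsym P f <-> 1 - c <= CSbal P f c <= c)).
Proof.
move=> c.
have mpos : measurable (@pos_event X).
  have := @measurable_snd _ _ X bool measurableT [set true] I.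
  by rewrite setTI.
have mneg : measurable (@neg_event X).
  have := @measurable_snd _ _ X bool measurableT [set false] I.
  by rewrite setTI.
have e1 : FNR P (fun x => 1 - f x) = 1 - FNR P f.
  rewrite /FNR (_ : (fun x => 1 - (1 - f x)) = f); last first.
    by apply: funext => x; rewrite subKr.
  by rewrite condE_compl // subKr.
have e2 : FPR P (fun x => 1 - f x) = 1 - FPR P f.
  by rewrite /FPR condE_compl.
have eDI : DI P (fun x => 1 - f x) = (1 - FPR P f) / FNR P f.
  by rewrite /DI e1 e2 subKr.
rewrite /DIsym eDI {eDI e1 e2}.
rewrite /CSbal /DI.
move: (FNR P f) (FPR P f) => a b.
case/andP: htau => t0 t1.
have tp : 0 < 1 + tau by lra.
have c0 : 0 < c by rewrite invr_gt0.
have hc1 : 1 - c = tau * c.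
  by rewrite /c; field; rewrite gt_eqF.
have hc2 : c = c * 1 by rewrite mulr1.
have hCS : (1 - c) * a + c * b = c * (tau * a + b).
  by rewrite hc1; ring.
rewrite hCS hc1 [tau * c]mulrC ler_pM2l //.
split.
  move=> ha; rewrite ler_pdivlMr ?subr_gt0 //.
  split => H; nra.
case/andP=> a0 a1.
rewrite le_min ler_pdivlMr ?subr_gt0 // ler_pdivlMr //.
rewrite {2}hc2 ler_pM2l //.
split.
  case/andP=> H1 H2; apply/andP; split; nra.
case/andP=> H1 H2; apply/andP; split; nra.
Qed.
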